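(* For real $x>0$, let $$W_0(x)=\sum_{\substack{n\geqslant 1\\ \lfloor x/n\rfloor=\lfloor x/(n+1)\rfloor}}\bigl\lvert \{x/(n+1)\}-\{x/n\}\bigr\rvert .$$ Then, for $x>0$, $$W_0(x)=\frac 23\sqrt{x}+O(1),$$ with an absolute implied constant.
   Context: For a real number $t$, $\lfloor t\rfloor$ denotes its integer part and $\{t\}=t-\lfloor t\rfloor$ its fractional part. *)

(* Defs.v *)
From Stdlib Require Import Reals.
From Coquelicot Require Import Coquelicot.
Open Scope R_scope.

(* floor t = Int_part t (Stdlib: Int_part t = up t - 1, the integer part);
   fractional part {t} = frac_part t = t - Int_part t. *)

Definition W0_term (x : R) (n : nat) : R :=
  if Z.eq_dec (Int_part (x / INR n)) (Int_part (x / INR (n + 1)))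
  then Rabs (frac_part (x / INR (n + 1)) - frac_part (x / INR n))
  else 0.

(* Reindexed from k = 0: the k-th summand corresponds to n = k + 1 >= 1. *)
Definition W0_seq (x : R) (k : nat) : R := W0_term x (S k).

Definition W0 (x : R) : R := Series (W0_seq x).

(* Main.v *)
Require Import Defs.
From Stdlib Require Import Reals Lra Lia.
From Coquelicot Require Import Coquelicot.
Open Scope R_scope.


Definition g (x : R) (n : nat) : R := x / INR n - x / INR (n + 1).
Definition th (x : R) (n : nat) : R := frac_part (x / INR n).

Lemma IP_diff (a b : R) : b < a -> a - b < 1 ->
  Int_part a = Int_part b \/ IZR (Int_part a) = IZR (Int_part b) + 1.
Proof.
  intros H1 H2. destruct (base_Int_part a) as [Ha1 Ha2].
  destruct (base_Int_part b) as [Hb1 Hb2].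
  assert (L : (-1 < Int_part a - Int_part b)%Z).
  { apply lt_IZR. rewrite minus_IZR. simpl. lra. }
  assert (U : (Int_part a - Int_part b < 2)%Z).
  { apply lt_IZR. rewrite minus_IZR. simpl. lra. }
  assert (Int_part a = Int_part b \/ Int_part a = (Int_part b + 1)%Z)%Z as [E|E] by lia.
  - left; exact E.
  - right. rewrite E, plus_IZR. reflexivity.
Qed.

Lemma g_pos x n : 0 < x -> (1 <= n)%nat -> g x n = x / (INR n * INR (n+1)) /\ 0 < g x n.
Proof.
  intros Hx Hn. assert (0 < INR n) by (apply lt_0_INR; lia).
  assert (0 < INR (n+1)) by (apply lt_0_INR; lia).
  assert (E : g x n = x / (INR n * INR (n+1))).
  { unfold g. rewrite plus_INR. simpl. rewrite plus_INR in H0. simpl in H0. field. lra. }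
  split; [exact E|]. rewrite E. apply Rdiv_lt_0_compat; [lra| nra].
Qed.

Lemma term_big x n : 0 < x -> (1 <= n)%nat -> x < INR n * INR (n+1) ->
  W0_term x n = g x n - (g x n)^2 + g x n * (th x n - th x (n+1)).
Proof.
  intros Hx Hn Hb. destruct (g_pos x n Hx Hn) as [E P].
  assert (g x n < 1).
  { rewrite E. assert (0 < INR n * INR (n+1)) by lra.
    apply (Rmult_lt_reg_r (INR n * INR (n+1))); [lra|]. unfold Rdiv.
    rewrite Rmult_assoc, Rinv_l by lra. lra. }
  unfold W0_term, th, frac_part.
  assert (Hg : g x n = x / INR n - x / INR (n+1)) by reflexivity.
  destruct (IP_diff (x / INR n) (x / INR (n+1))) as [D|D]; try lra.
  - destruct (Z.eq_dec _ _) as [_|C]; [|contradiction].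
    rewrite D.
    replace (x / INR (n + 1) - IZR (Int_part (x / INR (n+1))) -
      (x / INR n - IZR (Int_part (x / INR (n+1))))) with (- g x n) by (rewrite Hg; ring).
    rewrite Rabs_Ropp, Rabs_pos_eq by lra. rewrite Hg. ring.
  - destruct (Z.eq_dec _ _) as [C|_].
    + rewrite C in D. lra.
    + rewrite D. rewrite Hg. ring.
Qed.

Lemma term_small x n : 0 < x -> (1 <= n)%nat -> INR n * INR (n+1) <= x -> W0_term x n = 0.
Proof.
  intros Hx Hn Hb. destruct (g_pos x n Hx Hn) as [E P].
  assert (1 <= g x n).
  { rewrite E. assert (0 < INR n * INR (n+1)) by (apply Rmult_lt_0_compat; apply lt_0_INR; lia).
    apply (Rmult_le_reg_r (INR n * INR (n+1))); [lra|]. unfold Rdiv.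
    rewrite Rmult_assoc, Rinv_l by lra. lra. }
  unfold W0_term. destruct (Z.eq_dec _ _) as [C|_]; [|reflexivity].
  exfalso. destruct (base_Int_part (x / INR n)) as [Ha1 Ha2].
  destruct (base_Int_part (x / INR (n+1))) as [Hb1 Hb2]. rewrite C in Ha1, Ha2.
  unfold g in H. lra.
Qed.

Lemma term_cases x n : 0 < x -> (1 <= n)%nat -> W0_term x n = 0 \/ W0_term x n = g x n.
Proof.
  intros Hx Hn. unfold W0_term. destruct (Z.eq_dec _ _) as [C|_]; [|left; reflexivity].
  right. unfold frac_part. rewrite C. destruct (g_pos x n Hx Hn) as [_ P]. unfold g in *.
  rewrite <- Rabs_Ropp, Rabs_pos_eq; lra.
Qed.

Fixpoint sm (f : nat -> R) (a j : nat) : R :=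
  match j with O => 0 | S j => sm f a j + f (a + j)%nat end.

Lemma sm_add f a j k : sm f a (j + k) = sm f a j + sm f (a + j) k.
Proof. induction k; simpl. rewrite Nat.add_0_r; ring. rewrite Nat.add_succ_r. simpl. rewrite IHk.
  rewrite Nat.add_assoc. ring. Qed.

Lemma sm_zero f a j : (forall i, (i < j)%nat -> f (a + i)%nat = 0) -> sm f a j = 0.
Proof. induction j; intros H; simpl. reflexivity. rewrite IHj, H; auto. ring. Qed.

Lemma partial_sm x K : sum_n (W0_seq x) K = sm (W0_term x) 1 (S K).
Proof.
  induction K.
  - rewrite sum_O. simpl. unfold W0_seq. ring.
  - unfold sum_n in *. rewrite sum_n_Sm by lia. rewrite IHK. change (sm (W0_term x) 1 (S (S K)))
      with (sm (W0_term x) 1 (S K) + W0_term x (1 + S K)). reflexivity.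
Qed.

Lemma INRp n : (1 <= n)%nat -> 0 < INR n.
Proof. intros; apply lt_0_INR; lia. Qed.

Lemma big_mono x M i : (1 <= M)%nat -> x < INR M * INR (M+1) -> x < INR (M+i) * INR (M+i+1).
Proof.
  intros HM H. rewrite !plus_INR in *. simpl in *. pose proof (pos_INR i).
  pose proof (INRp M HM). nra.
Qed.

Definition Zs x M j := sm (fun n => g x n * (th x n - th x (n+1))) M j.

Lemma main_id x M j : 0 < x -> (1 <= M)%nat -> x < INR M * INR (M+1) ->
  sm (W0_term x) M j = (x / INR M - x / INR (M + j)) - sm (fun n => (g x n)^2) M j + Zs x M j.
Proof.
  intros Hx HM Hb. unfold Zs. induction j; cbn [sm].
  - rewrite Nat.add_0_r. ring.
  - rewrite IHj. rewrite term_big; auto; [|lia|apply big_mono; auto].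
    replace (M + S j)%nat with (M + j + 1)%nat by lia.
    assert (E : g x (M+j) = x / INR (M+j) - x / INR (M+j+1)) by reflexivity.
    rewrite E at 1. ring.
Qed.

Lemma g_dec x n : 0 < x -> (1 <= n)%nat -> g x (n+1) <= g x n.
Proof.
  intros Hx Hn. destruct (g_pos x n Hx Hn) as [E1 _]. destruct (g_pos x (n+1) Hx ltac:(lia)) as [E2 _].
  rewrite E1, E2. rewrite !plus_INR. simpl. pose proof (INRp n Hn).
  apply Rmult_le_compat_l; [lra|]. apply Rinv_le_contravar; nra.
Qed.

Lemma th_bnd x n : 0 <= th x n < 1.
Proof. unfold th. destruct (base_fp (x / INR n)). lra. Qed.

Lemma Z_inv x M j : 0 < x -> (1 <= M)%nat ->
  g x M * th x M - g x M + g x (M+j) <= Zs x M j + g x (M+j) * th x (M+j) <= g x M * th x M.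
Proof.
  intros Hx HM. unfold Zs. induction j; simpl.
  - rewrite Nat.add_0_r. lra.
  - replace (M + S j)%nat with (M + j + 1)%nat by lia.
    pose proof (g_dec x (M+j) Hx ltac:(lia)). pose proof (th_bnd x (M+j+1)).
    pose proof (g_pos x (M+j+1) Hx ltac:(lia)).
    split; nra.
Qed.

Lemma Z_bnd x M j : 0 < x -> (1 <= M)%nat -> Rabs (Zs x M j) <= g x M.
Proof.
  intros Hx HM. destruct (Z_inv x M j Hx HM). pose proof (th_bnd x M). pose proof (th_bnd x (M+j)).
  destruct (g_pos x (M+j) Hx ltac:(lia)). destruct (g_pos x M Hx ltac:(lia)).
  apply Rabs_le. split; nra.
Qed.

Definition h3 (r : R) := 1 / (3 * r^3).

Lemma sq_up x n : 0 < x -> (1 <= n)%nat -> (g x n)^2 <= x^2 * (h3 (INR n) - h3 (INR (n+1))).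
Proof.
  intros Hx Hn. destruct (g_pos x n Hx Hn) as [E _]. rewrite E. rewrite plus_INR. simpl.
  pose proof (INRp n Hn). set (r := INR n) in *. unfold h3.
  assert (x ^ 2 * (1 / (3 * r ^ 3) - 1 / (3 * (r + 1) ^ 3)) - (x / (r * (r + 1))) ^ 2
     = x^2 / (3 * r^3 * (r+1)^3)) by (field; lra).
  assert (0 <= x^2 / (3 * r^3 * (r+1)^3)).
  { apply Rdiv_le_0_compat. nra. apply Rmult_lt_0_compat. apply Rmult_lt_0_compat. lra.
    apply pow_lt; lra. apply pow_lt; lra. }
  lra.
Qed.

Lemma sq_lo x n : 0 < x -> (1 <= n)%nat -> x^2 * (h3 (INR (n+1)) - h3 (INR (n+2))) <= (g x n)^2.
Proof.
  intros Hx Hn. destruct (g_pos x n Hx Hn) as [E _]. rewrite E. rewrite !plus_INR. simpl.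
  pose proof (INRp n Hn). set (r := INR n) in *. unfold h3.
  assert ((x / (r * (r + 1))) ^ 2 - x ^ 2 * (1 / (3 * (r+1) ^ 3) - 1 / (3 * (r + (1+1)) ^ 3))
     = x^2 * (12*r^3+47*r^2+60*r+24) / (3 * r^2 * (r+1)^3 * (r+2)^3)) by (field; lra).
  assert (0 <= x^2 * (12*r^3+47*r^2+60*r+24) / (3 * r^2 * (r+1)^3 * (r+2)^3)).
  { apply Rdiv_le_0_compat. apply Rmult_le_pos. nra. nra.
    repeat apply Rmult_lt_0_compat; try lra; apply pow_lt; lra. }
  lra.
Qed.

Lemma Q_up x M j : 0 < x -> (1 <= M)%nat ->
  sm (fun n => (g x n)^2) M j <= x^2 * (h3 (INR M) - h3 (INR (M+j))).
Proof.
  intros Hx HM. induction j; cbn [sm].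
  - rewrite Nat.add_0_r. lra.
  - pose proof (sq_up x (M+j) Hx ltac:(lia)). replace (M + S j)%nat with (M+j+1)%nat by lia. nra.
Qed.

Lemma Q_lo x M j : 0 < x -> (1 <= M)%nat ->
  x^2 * (h3 (INR (M+1)) - h3 (INR (M+j+1))) <= sm (fun n => (g x n)^2) M j.
Proof.
  intros Hx HM. induction j; cbn [sm].
  - rewrite Nat.add_0_r. lra.
  - pose proof (sq_lo x (M+j) Hx ltac:(lia)). replace (M + S j + 1)%nat with (M+j+2)%nat by lia. nra.
Qed.

Lemma P1 m x : 1 <= m -> m*m - m <= x -> x <= m*m + m -> 0 <= 3*m^2*x - x^2 - 2*m^4 + 2*m^3.
Proof. intros. assert (0 <= (x - m*m + m) * m^2) by nra. assert (0 <= (m*m+m - x)*(x - m*m + m)) by nra.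
  assert (0 <= m^2*(m-1)) by nra. nra. Qed.

Lemma P2 m x : 1 <= m -> m*m - m <= x -> x <= m*m + m ->
   3*x*(m+1)^3 - x^2*m - (2*m+7)*m*(m+1)^3 <= 0.
Proof. intros.
  assert (0 <= 3*(m+1)^3 - m*(x + m*(m+1))) by nra.
  assert (0 <= (m*(m+1) - x) * (3*(m+1)^3 - m*(x + m*(m+1)))) by nra.
  assert (0 <= m*(m+1)^2 * (3*m + 4)) by nra.
  nra. Qed.

Lemma sqrt_bnds m x : 1 <= m -> m*m - m <= x -> x <= m*m + m -> m - 1 <= sqrt x <= m + 1.
Proof.
  intros. split.
  - rewrite <- (sqrt_square (m-1)) by lra. apply sqrt_le_1_alt. nra.
  - rewrite <- (sqrt_square (m+1)) by lra. apply sqrt_le_1_alt. nra.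
Qed.

Lemma RB1 m x : 1 <= m -> m*m - m <= x -> x <= m*m + m ->
  2/3 * sqrt x - 4/3 <= x/m - x^2 * h3 m.
Proof.
  intros. pose proof (sqrt_bnds m x H H0 H1). pose proof (P1 m x H H0 H1). unfold h3.
  assert (E : x/m - x^2 * (1/(3*m^3)) - (2*m/3 - 2/3) = (3*m^2*x - x^2 - 2*m^4 + 2*m^3) / (3*m^3))
    by (field; lra).
  assert (0 <= (3*m^2*x - x^2 - 2*m^4 + 2*m^3) / (3*m^3)).
  { apply Rdiv_le_0_compat; [lra|]. assert (0 < m^3) by (apply pow_lt; lra). lra. }
  lra.
Qed.

Lemma RB2 m x : 1 <= m -> m*m - m <= x -> x <= m*m + m ->
  x/m - x^2 * h3 (m+1) <= 2/3 * sqrt x + 3.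
Proof.
  intros. pose proof (sqrt_bnds m x H H0 H1). pose proof (P2 m x H H0 H1). unfold h3.
  assert (E : x/m - x^2 * (1/(3*(m+1)^3)) - (2*m+7)/3 =
     (3*x*(m+1)^3 - x^2*m - (2*m+7)*m*(m+1)^3) / (3*m*(m+1)^3)) by (field; lra).
  assert ((3*x*(m+1)^3 - x^2*m - (2*m+7)*m*(m+1)^3) / (3*m*(m+1)^3) <= 0).
  { unfold Rdiv. apply Rmult_le_0_r; [lra|]. apply Rlt_le, Rinv_0_lt_compat.
    assert (0 < (m+1)^3) by (apply pow_lt; lra). nra. }
  lra.
Qed.

Lemma tailh x L : 1 <= L -> x^2 < L -> 0 <= x^2 * h3 L <= 1.
Proof.
  intros. unfold h3. assert (0 < L^3) by (apply pow_lt; lra).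
  assert (L <= L^3) by (simpl; nra).
  split. apply Rmult_le_pos. apply pow2_ge_0. apply Rlt_le, Rdiv_lt_0_compat; lra.
  replace (x^2 * (1/(3*L^3))) with (x^2 / (3*L^3)) by (field; lra).
  apply (Rmult_le_reg_r (3*L^3)); [lra|]. unfold Rdiv. rewrite Rmult_assoc, Rinv_l by lra. lra.
Qed.

Lemma exN_aux k : forall x, 0 <= x -> x < INR (k+1) * INR (k+2) ->
  exists N, INR N * INR (N+1) <= x /\ x < INR (N+1) * INR (N+2).
Proof.
  induction k; intros x Hx H.
  - exists 0%nat. simpl in *. lra.
  - destruct (Rlt_le_dec x (INR (k+1) * INR (k+2))) as [L|L].
    + apply IHk; auto.
    + exists (S k). rewrite !plus_INR, !S_INR in *. simpl in *. split; lra.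
Qed.

Lemma exN x : 0 <= x -> exists N, INR N * INR (N+1) <= x /\ x < INR (N+1) * INR (N+2).
Proof.
  intros Hx. destruct (INR_archimed 1 x ltac:(lra)) as [k Hk].
  apply (exN_aux k); auto. rewrite !plus_INR. simpl. pose proof (pos_INR k). nra.
Qed.

Lemma nonneg x k : 0 < x -> 0 <= W0_seq x k.
Proof.
  intros Hx. unfold W0_seq. destruct (term_cases x (S k) Hx ltac:(lia)) as [E|E]; rewrite E.
  lra. destruct (g_pos x (S k) Hx ltac:(lia)); lra.
Qed.

Lemma sm_le x L : 0 < x -> sm (W0_term x) 1 L <= x - x / INR (1 + L).
Proof.
  intros Hx. induction L; cbn [sm].
  - simpl. lra.
  - assert (W0_term x (1+L) <= g x (1+L)).
    { destruct (term_cases x (1+L) Hx ltac:(lia)) as [E|E]; rewrite E; [|lra].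
      destruct (g_pos x (1+L) Hx ltac:(lia)); lra. }
    unfold g in H. replace (1 + S L)%nat with (1 + L + 1)%nat by lia. lra.
Qed.

Lemma exs x : 0 < x -> ex_series (W0_seq x).
Proof.
  intros Hx. destruct (ex_finite_lim_seq_incr (sum_n (W0_seq x)) x) as [l Hl].
  - intros n. unfold sum_n. rewrite sum_n_Sm by lia. pose proof (nonneg x (S n) Hx).
    change (plus (sum_n_m (W0_seq x) 0 n) (W0_seq x (S n))) with (sum_n_m (W0_seq x) 0 n + W0_seq x (S n)).
    lra.
  - intros n. rewrite partial_sm. pose proof (sm_le x (S n) Hx).
    assert (0 <= x / INR (1 + S n)) by (apply Rdiv_le_0_compat; [lra| apply lt_0_INR; lia]). lra.
  - exists l. exact Hl.
Qed.

Lemma abs_inv a b : Rabs a <= b -> -b <= a <= b.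
Proof. intros H. split; [pose proof (Rle_abs (-a)) as H0; rewrite Rabs_Ropp in H0 | pose proof (Rle_abs a)]; lra. Qed.

Theorem proposition1 :
  exists C : R, forall x : R, 0 < x ->
    ex_series (W0_seq x) /\ Rabs (W0 x - 2 / 3 * sqrt x) <= C.
Proof.
  exists 6. intros x Hx. split; [apply exs; auto|].
  destruct (exN x ltac:(lra)) as [N [HN1 HN2]].
  set (M := S N).
  assert (HM : (1 <= M)%nat) by (unfold M; lia).
  assert (Hb : x < INR M * INR (M+1)).
  { unfold M. replace (S N) with (N+1)%nat by lia. replace (N+1+1)%nat with (N+2)%nat by lia. exact HN2. }
  set (m := INR M).
  assert (Hm1 : 1 <= m) by (unfold m; apply (le_INR 1); lia).
  assert (HmA : m*m - m <= x).
  { unfold m, M. rewrite S_INR. rewrite plus_INR in HN1. simpl in HN1. lra. }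
  assert (HmB : x <= m*m + m).
  { rewrite plus_INR in Hb. change (INR 1) with 1 in Hb. fold m in Hb. nra. }
  assert (Z0 : sm (W0_term x) 1 N = 0).
  { apply sm_zero. intros i Hi. apply term_small; auto; [lia|].
    assert (INR (1+i) <= INR N) by (apply le_INR; lia).
    assert (INR (1+i+1) <= INR (N+1)) by (apply le_INR; lia).
    pose proof (pos_INR (1+i)). pose proof (pos_INR (1+i+1)). nra. }
  pose proof (Series_correct _ (exs x Hx)) as HS.
  assert (HL : Un_cv (sum_n (W0_seq x)) (W0 x)) by (apply is_lim_seq_Reals; exact HS).
  destruct (HL 1 ltac:(lra)) as [K1 HK1].
  destruct (INR_archimed 1 (x + x^2) ltac:(lra)) as [K0 HK0].
  set (K := Nat.max K1 (K0 + N)).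
  specialize (HK1 K ltac:(unfold K; lia)). unfold R_dist in HK1.
  set (j := (S K - N)%nat).
  assert (Hs : sum_n (W0_seq x) K = sm (W0_term x) M j).
  { rewrite partial_sm. replace (S K) with (N + j)%nat by (unfold j, K; lia).
    rewrite sm_add, Z0. replace (1 + N)%nat with M by (unfold M; lia). apply Rplus_0_l. }
  rewrite Hs in HK1.
  rewrite (main_id x M j Hx HM Hb) in HK1.
  pose proof (Q_up x M j Hx HM) as Qu. pose proof (Q_lo x M j Hx HM) as Ql.
  pose proof (Z_bnd x M j Hx HM) as Zb.
  assert (g x M < 1).
  { destruct (g_pos x M Hx HM) as [Eg Pg]. rewrite Eg.
    assert (0 < INR M * INR (M+1)) by (rewrite plus_INR; change (INR 1) with 1; fold m; nra).
    apply (Rmult_lt_reg_r (INR M * INR (M+1))); [lra|]. unfold Rdiv.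
    rewrite Rmult_assoc, Rinv_l by lra. lra. }
  assert (HLb : x + x^2 < INR (M + j)).
  { assert (INR K0 <= INR (M+j)) by (apply le_INR; unfold j, M, K; lia). lra. }
  assert (HL1 : 1 <= INR (M+j)) by (apply (le_INR 1); lia).
  assert (HL1' : INR (M+j) <= INR (M+j+1)) by (apply le_INR; lia).
  assert (Ta : 0 <= x / INR (M+j) <= 1).
  { split. apply Rdiv_le_0_compat; lra.
    apply (Rmult_le_reg_r (INR (M+j))); [lra|]. unfold Rdiv.
    rewrite Rmult_assoc, Rinv_l by lra. nra. }
  assert (Tb := tailh x (INR (M+j)) HL1 ltac:(nra)).
  assert (Tc := tailh x (INR (M+j+1)) ltac:(lra) ltac:(nra)).
  pose proof (RB1 m x Hm1 HmA HmB). pose proof (RB2 m x Hm1 HmA HmB).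
  rewrite (plus_INR M 1) in Ql. change (INR 1) with 1 in Ql. fold m in Qu, Ql.
  apply Rabs_le. apply Rabs_def2 in HK1. apply abs_inv in Zb. fold m in HK1. split; lra.
Qed.
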